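(* Let $n\geqslant1$. Every rainbow on $\{0,\dots,n\}$ of maximal size (among all rainbows on $\{0,\dots,n\}$) has exactly $\lfloor\frac{n+1}{2}\rfloor$ arcs.
   Context: An arc is a pair $\underline{x}\to\underline{y}$ of integers $0\leqslant x<y\leqslant n$, with weight $\binom{n}{x,\,y-x,\,n-y}=\frac{n!}{x!(y-x)!(n-y)!}$ (this is the number of subgroup inclusions $H\leqslant K$ in $C_{p_1\cdots p_n}$, $p_i$ distinct primes, with $|H|$ a product of $x$ of the primes and $|K|$ a product of $y$ of them). A rainbow on $\{0,\dots,n\}$ is a set of arcs $\{\underline{x_i}\to\underline{y_i}\}_{0\leqslant i\leqslant m}$ with $x_0<x_1<\dots<x_m<y_m<\dots<y_0$; its size is the sum of the weights of its arcs. *)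

(* Defs.v *)
From mathcomp Require Import all_boot.
Set Implicit Arguments. Unset Strict Implicit. Unset Printing Implicit Defensive.

Definition rarc := (nat * nat)%type.

Definition arc_weight (n : nat) (a : rarc) : nat :=
  n`! %/ ((a.1)`! * (a.2 - a.1)`! * (n - a.2)`!).

Definition nested (a b : rarc) : bool := (a.1 < b.1) && (b.2 < a.2).

(* A rainbow on {0..n}: the arcs {x_i -> y_i}_{0<=i<=m} listed in order
   i = 0..m, with x_0 < ... < x_m < y_m < ... < y_0, all arcs in {0..n}
   (so 0 <= x_i < y_i <= n). *)
Definition is_rainbow (n : nat) (s : seq rarc) : bool :=
  [&& s != [::], sorted nested s & all (fun a => (a.1 < a.2) && (a.2 <= n)) s].

Definition rainbow_size (n : nat) (s : seq rarc) : nat :=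
  \sum_(a <- s) arc_weight n a.

(* Main.v *)
Require Import Defs.
From mathcomp Require Import all_boot.
From mathcomp Require Import zify ring.
From mathcomp Require Import zify ring.

Definition g (n a c : nat) : nat := 'C(n, a) * 'C(n - a, c).

Lemma g_fact n a c : a + c <= n -> g n a c * (a`! * c`! * (n - a - c)`!) = n`!.
Proof.
move=> H; rewrite /g.
have H1 : a <= n by lia.
have H2 : c <= n - a by lia.
rewrite -(bin_fact H1) -(bin_fact H2) -subnDA.
rewrite !mulnA; lia.
Qed.

Lemma g_zero n a c : n < a + c -> g n a c = 0.
Proof.
move=> H; rewrite /g.
case: (leqP a n) => Ha.
  by rewrite (bin_small (n := n - a) (m := c)) ?muln0 //; lia.
by rewrite bin_small.
Qed.

Lemma g_gt0 n a c : a + c <= n -> 0 < g n a c.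
Proof.
move=> H; rewrite /g muln_gt0 !bin_gt0; apply/andP; split; lia.
Qed.

Lemma fact_gt0' m : 0 < m`!. Proof. exact: fact_gt0. Qed.

Lemma g_sym n a c : g n a c = g n c a.
Proof.
case: (leqP (a + c) n) => H; last by rewrite !g_zero //; lia.
have K : 0 < a`! * c`! * (n - a - c)`! by rewrite !muln_gt0 !fact_gt0.
apply/eqP; rewrite -(eqn_pmul2r K); apply/eqP.
rewrite g_fact //.
have -> : a`! * c`! * (n - a - c)`! = c`! * a`! * (n - c - a)`!.
  by rewrite (mulnC a`!) -subnDA addnC subnDA.
by rewrite g_fact // addnC.
Qed.

(* moving a unit from b to a *)
Lemma g_R2 n a c : g n a.+1 c * a.+1 = g n a c * (n - a - c).
Proof.
case: (leqP (a.+1 + c) n) => H; last first.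
  rewrite g_zero // ; have -> : n - a - c = 0 by lia. by rewrite !muln0.
have E2 : a + c <= n by lia.
have E1 := @g_fact n a.+1 c H.
have E3 := @g_fact n a c E2.
set m := n - a.+1 - c in E1 *.
have Em : n - a - c = m.+1 by rewrite /m; lia.
rewrite Em factS in E3. rewrite factS in E1. rewrite Em.
have K : 0 < a`! * c`! * m`! by rewrite !muln_gt0 !fact_gt0.
apply/eqP; rewrite -(eqn_pmul2r K); apply/eqP.
transitivity (n`!); [rewrite -E1 | rewrite -E3]; ring.
Qed.

Lemma g_R3 n a c : g n a c.+1 * c.+1 = g n a c * (n - a - c).
Proof. by rewrite g_sym g_R2 g_sym; congr (_ * _); lia. Qed.

Lemma g_R1 n a c : g n a.+1 c * a.+1 = g n a c.+1 * c.+1.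
Proof.
rewrite g_R2 g_R3 //.
Qed.

Lemma g_P00 n : g n 0 0 = 1.
Proof. by rewrite /g !bin0. Qed.

Lemma g_P0 n c : g n.+1 0 c.+1 = g n 0 c + g n 0 c.+1.
Proof. by rewrite /g !bin0 !mul1n !subn0 binS addnC. Qed.

Lemma g_Pa n a c : g n.+1 a.+1 c.+1 = g n a c.+1 + g n a.+1 c + g n a.+1 c.+1.
Proof.
rewrite /g subSS binS mulnDl addnC -addnA; congr (_ + _).
case: (ltnP a n) => H.
  have -> : n - a = (n - a.+1).+1 by lia.
  by rewrite binS mulnDr addnC.
by rewrite (bin_small (n := n) (m := a.+1)) ?mul0n //; lia.
Qed.

Lemma g_big n a c : n < a -> g n a c = 0.
Proof. move=> H; apply: g_zero; lia. Qed.

Definition u n j := \sum_(i < n.+1) g n i (i + j).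

Lemma ext_sum n (F : nat -> nat) :
  \sum_(i < n.+2) g n i (F i) = \sum_(i < n.+1) g n i (F i).
Proof. by rewrite big_ord_recr /= g_big // addn0. Qed.

Lemma u_recS n j : u n.+1 j.+1 = u n j + u n j.+1 + u n j.+2.
Proof.
rewrite /u big_ord_recl /= add0n g_P0.
under eq_bigr => i _ do rewrite /bump /= add1n addSn addnS g_Pa.
rewrite !big_split /=.
have E1 : g n 0 j + \sum_(i < n.+1) g n i.+1 (i + j).+1 = \sum_(i < n.+1) g n i (i + j).
  rewrite -(ext_sum n (fun i => i + j)) [RHS]big_ord_recl /=.
  by congr (_ + _); apply: eq_bigr => i _; rewrite /bump /=; congr (g _ _ _); lia.
have E2 : g n 0 j.+1 + \sum_(i < n.+1) g n i.+1 (i + j).+2 = \sum_(i < n.+1) g n i (i + j.+1).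
  rewrite -(ext_sum n (fun i => i + j.+1)) [RHS]big_ord_recl /=.
  by congr (_ + _); apply: eq_bigr => i _; rewrite /bump /=; congr (g _ _ _); lia.
have E3 : \sum_(i < n.+1) g n i (i + j).+2 = \sum_(i < n.+1) g n i (i + j.+2).
  by apply: eq_bigr => i _; rewrite !addnS.
rewrite -E1 -E2 -E3; ring.
Qed.

Lemma u_rec0 n : u n.+1 0 = u n 0 + u n 1 + u n 1.
Proof.
rewrite /u big_ord_recl /= g_P00.
under eq_bigr => i _ do rewrite /bump /= add1n addn0 g_Pa.
rewrite !big_split /=.
have E1 : 1 + \sum_(i < n.+1) g n i.+1 i.+1 = \sum_(i < n.+1) g n i (i + 0).
  rewrite -(ext_sum n (fun i => i + 0)) [RHS]big_ord_recl /= g_P00.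
  by congr (_ + _); apply: eq_bigr => i _; rewrite /bump /=; congr (g _ _ _); lia.
have E2 : \sum_(i < n.+1) g n i i.+1 = \sum_(i < n.+1) g n i (i + 1).
  by apply: eq_bigr => i _; rewrite addn1.
have E3 : \sum_(i < n.+1) g n i.+1 i = \sum_(i < n.+1) g n i (i + 1).
  by apply: eq_bigr => i _; rewrite addn1 g_sym.
rewrite -E1 -E2; rewrite E2 -E3; ring.
Qed.

Lemma u_mono n : forall j, u n j.+1 <= u n j.
Proof.
elim: n => [|n IH] j.
  by rewrite /u !big_ord1 /= /g bin0 sub0n add0n bin0n.
case: j => [|j].
  rewrite u_recS u_rec0. have := IH 1. lia.
rewrite !u_recS. have := IH j. have := IH j.+1. have := IH j.+2. lia.
Qed.

Lemma arc_weight_g n x y : x <= y <= n -> arc_weight n (x, y) = g n x (n - y).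
Proof.
move=> /andP [H1 H2]; rewrite /arc_weight /=.
have H : x + (n - y) <= n by lia.
rewrite -(@g_fact n x (n - y) H).
have -> : n - x - (n - y) = y - x by lia.
by rewrite [_ * _ * (y - x)`!]mulnAC mulnK // !muln_gt0 !fact_gt0.
Qed.

Lemma rainbow_mkseq n (f : nat -> rarc) k :
  0 < k -> (forall i, i.+1 < k -> nested (f i) (f i.+1)) ->
  (forall i, i < k -> (f i).1 < (f i).2 <= n) -> is_rainbow n (mkseq f k).
Proof.
move=> Hk Hn Hb; apply/and3P; split.
- by case: k Hk {Hn Hb}.
- apply/(sortedP (0,0)) => i; rewrite size_mkseq => Hi.
  by rewrite !nth_mkseq //; [apply: Hn | lia].
- apply/(all_nthP (0,0)) => i; rewrite size_mkseq => Hi.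
  by rewrite nth_mkseq //; apply: Hb.
Qed.

Lemma size_mkseq_sum n (f : nat -> rarc) k :
  rainbow_size n (mkseq f k) = \sum_(i < k) arc_weight n (f i).
Proof.
by rewrite /rainbow_size /mkseq big_map -(big_mkord xpredT (fun i => arc_weight n (f i))) /index_iota subn0.
Qed.

Lemma size_nth_sum n s :
  rainbow_size n s = \sum_(i < size s) arc_weight n (nth (0,0) s i).
Proof. by rewrite -size_mkseq_sum mkseq_nth. Qed.

Lemma sum_update k (F G : nat -> nat) j : j < k ->
  (forall i, i != j -> F i = G i) ->
  \sum_(i < k) F i + G j = \sum_(i < k) G i + F j.
Proof.
move=> Hj HFG.
rewrite [in LHS](bigD1 (Ordinal Hj)) // [in RHS](bigD1 (Ordinal Hj)) //=.
rewrite (eq_bigr (fun i : 'I_k => G i)); first by lia.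
by move=> i Hi; apply: HFG; apply: contra Hi => /eqP Hij; apply/eqP/val_inj.
Qed.

Lemma ratio_a n a c : 0 < g n a c -> g n a.+1 c <= g n a c -> n - a - c <= a.+1.
Proof.
move=> H0 H; rewrite -(leq_pmul2l H0) -g_R2; exact: leq_mul.
Qed.
Lemma ratio_a' n a c : 0 < g n a.+1 c -> g n a c <= g n a.+1 c -> a.+1 <= n - a - c.
Proof.
move=> H0 H; rewrite -(leq_pmul2l H0) g_R2; exact: leq_mul.
Qed.
Lemma ratio_c n a c : 0 < g n a c -> g n a c.+1 <= g n a c -> n - a - c <= c.+1.
Proof.
move=> H0 H; rewrite -(leq_pmul2l H0) -g_R3; exact: leq_mul.
Qed.
Lemma ratio_c' n a c : 0 < g n a c.+1 -> g n a c <= g n a c.+1 -> c.+1 <= n - a - c.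
Proof.
move=> H0 H; rewrite -(leq_pmul2l H0) g_R3; exact: leq_mul.
Qed.
Lemma cmp_ratio x y p q : x * p = y * q -> p <= q -> 0 < p -> y <= x.
Proof.
move=> E Hpq Hp; rewrite -(leq_pmul2r Hp) E; exact: leq_mul.
Qed.

Lemma trunc_sum K N (F : nat -> nat) : K <= N -> (forall i, K <= i < N -> F i = 0) ->
  \sum_(i < N) F i = \sum_(i < K) F i.
Proof.
move=> HK HF.
rewrite -(big_mkord xpredT F) -(big_mkord xpredT F).
rewrite (big_cat_nat (leq0n K) HK) /=.
rewrite [X in _ + X]big_nat_cond [X in _ + X]big1 ?addn0 // => i /andP [Hi _]; exact: HF.
Qed.

Lemma P_ok n A C K : 0 < K -> A + C + 2 * K.-1 < n ->
  is_rainbow n (mkseq (fun i => (A + i, n - C - i)) K) /\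
  rainbow_size n (mkseq (fun i => (A + i, n - C - i)) K) = \sum_(i < K) g n (A + i) (C + i).
Proof.
move=> HK H; split.
- apply: rainbow_mkseq => //.
  + move=> i Hi; rewrite /nested /=; apply/andP; split; lia.
  + move=> i Hi /=; apply/andP; split; lia.
- rewrite size_mkseq_sum; apply: eq_bigr => i _.
  have Hi := ltn_ord i.
  rewrite arc_weight_g; last by apply/andP; split; lia.
  congr (g _ _ _); lia.
Qed.

Lemma hard_ineq k :
  \sum_(i < k) g (k.*2.+1) i (i + 1) < \sum_(i < k.+1) g (k.*2.+1) (0 + i) (0 + i).
Proof.
pose n := k.*2.+1.
have H1 : k.+1 <= n.+1 by rewrite /n; lia.
have E0 : u n 0 = \sum_(i < k.+1) g n i (i + 0).
  apply: (@trunc_sum k.+1 n.+1 (fun i => g n i (i + 0)) H1).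
  move=> i Hi; apply: g_zero; rewrite /n; lia.
have E1 : u n 1 = \sum_(i < k.+1) g n i (i + 1).
  apply: (@trunc_sum k.+1 n.+1 (fun i => g n i (i + 1)) H1).
  move=> i Hi; apply: g_zero; rewrite /n; lia.
rewrite big_ord_recr /= in E1.
have E2 : \sum_(i < k.+1) g n (0 + i) (0 + i) = \sum_(i < k.+1) g n i (i + 0).
  by apply: eq_bigr => i _; rewrite add0n addn0.
have Hm := u_mono n 0.
have Hg := @g_gt0 n k (k + 1) ltac:(rewrite /n; lia).
rewrite -/n E2 -E0.
move: E1 Hm Hg; move: (\sum_(i < k) g n i (i + 1)) => S; lia.
Qed.

Section R.
Variables (n : nat) (s : seq rarc).
Hypothesis Hr : is_rainbow n s.
Hypothesis Hmax : forall t : seq rarc, is_rainbow n t -> rainbow_size n t <= rainbow_size n s.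

Let X i := (nth (0,0) s i).1.
Let Y i := (nth (0,0) s i).2.

Lemma s_bounds i : i < size s -> X i < Y i <= n.
Proof.
move: Hr => /and3P [_ _ /(all_nthP (0,0)) H] Hi; exact: H.
Qed.

Lemma s_nested i : i.+1 < size s -> X i < X i.+1 /\ Y i.+1 < Y i.
Proof.
move: Hr => /and3P [_ /(sortedP (0,0)) H _] Hi.
by have /andP [] := H i Hi.
Qed.

Lemma s_pos : 0 < size s.
Proof. by move: Hr => /and3P [H _ _]; case: s H. Qed.

Lemma max_update j (p : rarc) : j < size s ->
  (0 < j -> nested (nth (0,0) s j.-1) p) ->
  (j.+1 < size s -> nested p (nth (0,0) s j.+1)) ->
  p.1 < p.2 <= n -> arc_weight n p <= arc_weight n (nth (0,0) s j).
Proof.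
move=> Hj Hl Hrr Hb.
pose f i := if i == j then p else nth (0,0) s i.
have Hf : is_rainbow n (mkseq f (size s)).
  apply: rainbow_mkseq; first exact: s_pos.
  - move=> i Hi; rewrite /f.
    have [Eij|Nij] := eqVneq i j.
    + subst i; rewrite gtn_eqF //; exact: Hrr.
    + have [Eij'|Nij'] := eqVneq i.+1 j.
      * subst j; exact: Hl.
      * by have [] := s_nested i Hi; rewrite /X /Y => A B; apply/andP.
  - move=> i Hi; rewrite /f; case: (eqVneq i j) => _ //; exact: s_bounds.
have := Hmax _ Hf; rewrite size_mkseq_sum size_nth_sum.
have := @sum_update (size s) (fun i => arc_weight n (f i)) (fun i => arc_weight n (nth (0,0) s i)) j Hj.
rewrite /f eqxx => E.
have {}E := E (fun i Hi => ltac:(by rewrite (negbTE Hi))).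
lia.
Qed.

Lemma nthXY i : nth (0,0) s i = (X i, Y i).
Proof. by rewrite /X /Y; case: nth. Qed.

Lemma wXY i : i < size s -> arc_weight n (nth (0,0) s i) = g n (X i) (n - Y i).
Proof.
move=> Hi; rewrite nthXY arc_weight_g //; have := s_bounds i Hi; lia.
Qed.

Lemma s_consecX i : i.+1 < size s -> X i.+1 = (X i).+1.
Proof.
move=> Hi; have [A B] := s_nested i Hi.
case: (leqP (X i.+1) (X i).+1) => H; first lia.
exfalso.
have Hi0 : i < size s by lia.
have Bi := s_bounds i Hi0. have Bi1 := s_bounds i.+1 Hi.
have W1 := @max_update i ((X i).+1, Y i) Hi0.
have {W1} : arc_weight n ((X i).+1, Y i) <= arc_weight n (nth (0,0) s i).
  apply: W1 => /=.
  - move=> Hp; have Hq : (i.-1).+1 < size s by lia.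
    have [C D] := s_nested i.-1 Hq; rewrite prednK // in C D.
    rewrite nthXY; apply/andP; split => /=; lia.
  - move=> _; rewrite nthXY; apply/andP; split => /=; lia.
  - lia.
rewrite wXY // arc_weight_g /=; last lia.
move=> W1.
have P1 : X i + (n - Y i) <= n by lia.
have W1' := @ratio_a _ _ _ (@g_gt0 _ _ _ P1) W1.
have W2 := @max_update i.+1 ((X i.+1).-1, Y i.+1) Hi.
have {W2} : arc_weight n ((X i.+1).-1, Y i.+1) <= arc_weight n (nth (0,0) s i.+1).
  apply: W2 => /=.
  - move=> _; rewrite nthXY; apply/andP; split => /=; lia.
  - move=> Hq; have [C D] := s_nested i.+1 Hq.
    rewrite nthXY; apply/andP; split => /=; lia.
  - lia.
rewrite wXY // arc_weight_g /=; last lia.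
have -> : X i.+1 = ((X i.+1).-1).+1 by lia.
move=> W2.
have P2 : ((X i.+1).-1).+1 + (n - Y i.+1) <= n by lia.
have W2' := @ratio_a' _ _ _ (@g_gt0 _ _ _ P2) W2.
lia.
Qed.

Lemma s_consecY i : i.+1 < size s -> Y i = (Y i.+1).+1.
Proof.
move=> Hi; have [A B] := s_nested i Hi.
case: (leqP (Y i) (Y i.+1).+1) => H; first lia.
exfalso.
have Hi0 : i < size s by lia.
have Bi := s_bounds i Hi0. have Bi1 := s_bounds i.+1 Hi.
have W1 := @max_update i (X i, (Y i).-1) Hi0.
have {W1} : arc_weight n (X i, (Y i).-1) <= arc_weight n (nth (0,0) s i).
  apply: W1 => /=.
  - move=> Hp; have Hq : (i.-1).+1 < size s by lia.
    have [C D] := s_nested i.-1 Hq; rewrite prednK // in C D.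
    rewrite nthXY; apply/andP; split => /=; lia.
  - move=> _; rewrite nthXY; apply/andP; split => /=; lia.
  - lia.
rewrite wXY // arc_weight_g /=; last lia.
have -> : n - (Y i).-1 = (n - Y i).+1 by lia.
move=> W1.
have P1 : X i + (n - Y i) <= n by lia.
have W1' := @ratio_c _ _ _ (@g_gt0 _ _ _ P1) W1.
have W2 := @max_update i.+1 (X i.+1, (Y i.+1).+1) Hi.
have {W2} : arc_weight n (X i.+1, (Y i.+1).+1) <= arc_weight n (nth (0,0) s i.+1).
  apply: W2 => /=.
  - move=> _; rewrite nthXY; apply/andP; split => /=; lia.
  - move=> Hq; have [C D] := s_nested i.+1 Hq.
    rewrite nthXY; apply/andP; split => /=; lia.
  - lia.
rewrite wXY // arc_weight_g /=; last lia.
have -> : n - Y i.+1 = (n - (Y i.+1).+1).+1 by lia.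
move=> W2.
have P2 : X i.+1 + (n - (Y i.+1).+1).+1 <= n by lia.
have W2' := @ratio_c' _ _ _ (@g_gt0 _ _ _ P2) W2.
lia.
Qed.

Lemma s_formula i : i < size s -> X i = X 0 + i /\ Y i + i = Y 0.
Proof.
elim: i => [|i IH] Hi; first by rewrite !addn0; split.
have [IH1 IH2] := IH (ltnW Hi).
rewrite (s_consecX i Hi) (s_consecY i Hi) in IH2 *; split; lia.
Qed.

Lemma main_sec : size s = n.+1./2.
Proof.
have Hk := s_pos.
set k := size s in Hk *.
have B0 := s_bounds 0 Hk.
move: B0; move Ea: (X 0) => a; move EY: (Y 0) => Y0 => B0.
move Ec: (n - Y0) => c.
have Hm : k.-1 < k by lia.
have [Fm1 Fm2] := s_formula k.-1 Hm; rewrite Ea EY in Fm1 Fm2.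
have Bm := s_bounds k.-1 Hm.
have Hak : a + k.-1 < Y0 - k.-1 by move: Fm1 Fm2 Bm; move: (X k.-1) (Y k.-1) => xm ym; lia.
clear Fm1 Fm2 Bm.
have Ssum : rainbow_size n s = \sum_(i < k) g n (a + i) (c + i).
  rewrite size_nth_sum; apply: eq_bigr => i _.
  have Hi := ltn_ord i.
  rewrite wXY //; have [F1 F2] := s_formula i Hi; rewrite Ea EY in F1 F2.
  move: Hi F1 F2; move: (nat_of_ord i) => j Hj F1 F2.
  have := s_bounds j Hj.
  move: F1 F2; move: (X j) (Y j) => xj yj F1 F2 Bj.
  congr (g _ _ _); lia.
rewrite -divn2.
move: Ssum Hk Hm Hak; rewrite -/k; move: k => k Ssum Hk Hm Hak.
have HcY : c + Y0 = n by lia.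
clear Ec EY Ea.
case: (leqP n (2 * k)) => Hnk; first by lia.
exfalso.
have Hb : 1 <= n - a - c - 2 * k.-1 by lia.
case: (leqP 3 (n - a - c - 2 * k.-1)) => Hb3.
  have [Rt St] := @P_ok n a c k.+1 (ltn0Sn k) ltac:(lia).
  have := Hmax _ Rt; rewrite St Ssum big_ord_recr /=.
  have := @g_gt0 n (a + k) (c + k) ltac:(lia). lia.
case: (leqP 1 a) => Ha; case: (leqP 1 c) => Hc.
- have [Rt St] := @P_ok n (a - 1) (c - 1) k.+1 (ltn0Sn k) ltac:(lia).
  have := Hmax _ Rt; rewrite St Ssum big_ord_recl /=.
  have -> : \sum_(i < k) g n (a - 1 + bump 0 i) (c - 1 + bump 0 i) = \sum_(i < k) g n (a + i) (c + i).
    by apply: eq_bigr => i _; rewrite /bump /=; congr (g _ _ _); lia.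
  have := @g_gt0 n (a - 1 + 0) (c - 1 + 0) ltac:(lia).
  move: (\sum_(i < k) g n (a + i) (c + i)) => S; lia.
-
  case: (leqP 2 a) => Ha2.
    have [Rt St] := @P_ok n (a - 2) 0 k.+1 (ltn0Sn k) ltac:(lia).
    have := Hmax _ Rt; rewrite St Ssum big_ord_recl /=.
    have : \sum_(i < k) g n (a + i) (c + i) <= \sum_(i < k) g n (a - 2 + bump 0 i) (0 + bump 0 i).
      apply: leq_sum => i _; rewrite /bump /=.
      have E := g_R1 n (a + i).-1 i.
      have -> : a - 2 + (1 + i) = (a + i).-1 by lia.
      have -> : 0 + (1 + i) = i.+1 by lia.
      have -> : c + i = i by lia.
      have Ea' : a + i = ((a + i).-1).+1 by lia.
      rewrite {1}Ea'.
      apply: (@cmp_ratio _ _ _ _ (esym E)); lia.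
    have := @g_gt0 n (a - 2 + 0) (0 + 0) ltac:(lia).
    move: (\sum_(i < k) g n (a + i) (c + i)) (\sum_(i < k) g n (a - 2 + bump 0 i) (0 + bump 0 i)) => S1 S2; lia.
  (* a = 1, c = 0, b = 2 *)
  have Ea : a = 1 by lia.
  have Ec : c = 0 by lia.
  have Hn : n = k.*2.+1 by lia.
  have [Rt St] := @P_ok n 0 0 k.+1 (ltn0Sn k) ltac:(lia).
  have := Hmax _ Rt; rewrite St Ssum.
  have -> : \sum_(i < k) g n (a + i) (c + i) = \sum_(i < k) g n i (i + 1).
    by apply: eq_bigr => i _; rewrite Ea Ec g_sym; congr (g _ _ _); lia.
  rewrite Hn; have := hard_ineq k.
  move: (\sum_(i < k) g k.*2.+1 i (i + 1)) (\sum_(i < k.+1) g k.*2.+1 (0 + i) (0 + i)) => S1 S2; lia.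
-
  case: (leqP 2 c) => Hc2.
    have [Rt St] := @P_ok n 0 (c - 2) k.+1 (ltn0Sn k) ltac:(lia).
    have := Hmax _ Rt; rewrite St Ssum big_ord_recl /=.
    have : \sum_(i < k) g n (a + i) (c + i) <= \sum_(i < k) g n (0 + bump 0 i) (c - 2 + bump 0 i).
      apply: leq_sum => i _; rewrite /bump /=.
      have E := g_R1 n i (c + i).-1.
      have -> : c - 2 + (1 + i) = (c + i).-1 by lia.
      have -> : 0 + (1 + i) = i.+1 by lia.
      have -> : a + i = i by lia.
      have Ec' : c + i = ((c + i).-1).+1 by lia.
      rewrite {1}Ec'.
      apply: (@cmp_ratio _ _ _ _ E); lia.
    have := @g_gt0 n (0 + 0) (c - 2 + 0) ltac:(lia).
    move: (\sum_(i < k) g n (a + i) (c + i)) (\sum_(i < k) g n (0 + bump 0 i) (c - 2 + bump 0 i)) => S1 S2; lia.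
  have Ea : a = 0 by lia.
  have Ec : c = 1 by lia.
  have Hn : n = k.*2.+1 by lia.
  have [Rt St] := @P_ok n 0 0 k.+1 (ltn0Sn k) ltac:(lia).
  have := Hmax _ Rt; rewrite St Ssum.
  have -> : \sum_(i < k) g n (a + i) (c + i) = \sum_(i < k) g n i (i + 1).
    by apply: eq_bigr => i _; rewrite Ea Ec; congr (g _ _ _); lia.
  rewrite Hn; have := hard_ineq k.
  move: (\sum_(i < k) g k.*2.+1 i (i + 1)) (\sum_(i < k.+1) g k.*2.+1 (0 + i) (0 + i)) => S1 S2; lia.
- lia.
Qed.

End R.

Theorem corollary5p12 (n : nat) (s : seq rarc) :
  1 <= n ->
  is_rainbow n s ->
  (forall t : seq rarc, is_rainbow n t -> rainbow_size n t <= rainbow_size n s) ->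
  size s = n.+1./2.
Proof. move=> _ Hr Hmax; exact: main_sec Hr Hmax. Qed.
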